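(* Assume Case 2 holds, $d=0$ and $\delta<T_{s-1}$. Then: (1) if $l_1\le1$, then $c(Q^n)=\gamma_n$ for all $n\ge1$; (2) if $l_1>1$, then $l_1^{-1}\gamma\le c(q)<\gamma$, and $l_1^{-1}\gamma_n<c(Q^n)\le\gamma_n$ for all $n\ge2$. Here $\gamma_n=\gamma\delta^{n-1}$.
   Context: Let $f(z,w)=(p(z),q(z,w))$ be a holomorphic skew product germ at the origin of $\mathbb{C}^2$ with $f(0,0)=(0,0)$, where $p(z)=a_\delta z^\delta+O(z^{\delta+1})$ with $a_\delta\neq0$ and integer $\delta\ge1$, and $q(z,w)=\sum_{i+j\ge1}b_{ij}z^iw^j$ is not identically zero. For $n\ge1$ write $f^n=(p^n,Q^n)$. For a nonzero germ $g=\sum g_{ij}z^iw^j$ let $c(g)=\min\{i+j:g_{ij}\neq0\}$. The Newton polygon $N(g)$ is the convex hull of $\bigcup_{g_{ij}\neq0}\{(x,y):x\ge i,\ y\ge j\}$. Let $(n_1,m_1),\dots,(n_s,m_s)$ be the vertices of $N(q)$ with $n_1<\cdots<n_s$, $m_1>\cdots>m_s$; for $1\le k\le s-1$ let $T_k$ be the $y$-intercept of the line through $(n_k,m_k)$ and $(n_{k+1},m_{k+1})$. Case 2 means: $s>1$ and $\delta\le T_{s-1}$; set $(\gamma,d)=(n_s,m_s)$ and $l_1=\frac{n_s-n_{s-1}}{m_{s-1}-m_s}$. *)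

(* Defs.v *)
From HB Require Import structures.
From mathcomp Require Import all_boot all_order all_algebra.
From mathcomp Require Import boolp reals complex.

Set Implicit Arguments.
Unset Strict Implicit.
Unset Printing Implicit Defensive.

Import Order.TTheory GRing.Theory Num.Theory.
Local Open Scope ring_scope.

(* A (formal) power series in z, w : coefficient of z^i w^j at (i, j). *)
Definition ser (K : Type) := nat -> nat -> K.

Section Series.
Variable K : comNzRingType.

Definition smul (f g : ser K) : ser K :=
  fun i j => \sum_(a < i.+1) \sum_(b < j.+1) f a b * g (i - a)%N (j - b)%N.

Definition sone : ser K := fun i j => if (i == 0%N) && (j == 0%N) then 1 else 0.

Definition sexp (f : ser K) (n : nat) : ser K := iter n (smul f) sone.

(* Composition q(A, B) for series A, B with zero constant term;
   terms with k + l > i + j do not contribute to the coefficient (i,j). *)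
Definition scomp (q A B : ser K) : ser K :=
  fun i j => \sum_(k < (i + j).+1) \sum_(l < (i + j).+1)
               q k l * smul (sexp A k) (sexp B l) i j.

Definition zser : ser K := fun i j => if (i == 1%N) && (j == 0%N) then 1 else 0.
Definition wser : ser K := fun i j => if (i == 0%N) && (j == 1%N) then 1 else 0.

Definition lift1 (p : nat -> K) : ser K := fun i j => if j == 0%N then p i else 0.

(* f^n = (p^n, Q^n) for the skew product f = (p(z), q(z,w));
   f^0 = identity, f^(n+1) = f o f^n = (p(p^n), q(p^n, Q^n)). *)
Fixpoint skew_iter (p : nat -> K) (q : ser K) (n : nat) : ser K * ser K :=
  match n with
  | 0%N => (zser, wser)
  | n'.+1 => let PQ := skew_iter p q n' in
             (scomp (lift1 p) PQ.1 PQ.2, scomp q PQ.1 PQ.2)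
  end.

Definition Qit (p : nat -> K) (q : ser K) (n : nat) : ser K := (skew_iter p q n).2.

(* c(g) = min{ i + j : g_ij <> 0 }  (convention: 0 for the zero series) *)
Definition ord_pred (g : ser K) : pred nat :=
  fun m => [exists i : 'I_m.+1, g i (m - i)%N != 0].

Definition ser_order (g : ser K) : nat :=
  match pselect (exists m, ord_pred g m) with
  | left h => ex_minn h
  | right _ => 0%N
  end.

End Series.

(* Holomorphic germ at the origin: the power series converges on some
   polydisc, i.e. its coefficients satisfy a Cauchy estimate. *)
Definition convergent2 (R : rcfType) (g : ser R[i]) : Prop :=
  exists r M : R[i], 0 < r /\ forall i j, `|g i j| * r ^+ (i + j) <= M.

Definition convergent1 (R : rcfType) (p : nat -> R[i]) : Prop :=
  exists r M : R[i], 0 < r /\ forall i, `|p i| * r ^+ i <= M.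

Section Newton.
Variables (K : nzRingType) (R : realFieldType).

Definition quadrants (g : ser K) (x y : R) : Prop :=
  exists i j : nat, g i j != 0 /\ i%:R <= x /\ j%:R <= y.

(* Newton polygon: convex hull (finite convex combinations) of the union *)
Definition newton_polygon (g : ser K) (x y : R) : Prop :=
  exists (N : nat) (lam px py : nat -> R),
    (forall k, (k < N)%N -> 0 <= lam k /\ quadrants g (px k) (py k)) /\
    \sum_(k < N) lam k = 1 /\
    x = \sum_(k < N) lam k * px k /\ y = \sum_(k < N) lam k * py k.

(* vertex = extreme point of a planar set *)
Definition is_vertex (S : R -> R -> Prop) (x y : R) : Prop :=
  S x y /\
  forall x1 y1 x2 y2 t, S x1 y1 -> S x2 y2 -> 0 < t < 1 ->
    x = t * x1 + (1 - t) * x2 -> y = t * y1 + (1 - t) * y2 ->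
    x1 = x /\ y1 = y /\ x2 = x /\ y2 = y.

End Newton.

Definition y_intercept (R : realFieldType) (a1 b1 a2 b2 : nat) : R :=
  b1%:R - a1%:R * ((b2%:R - b1%:R) / (a2%:R - a1%:R)).

(* Main.v *)
Require Import Defs.
From HB Require Import structures.
From mathcomp Require Import all_boot all_order all_algebra.
From mathcomp Require Import boolp reals complex.
From mathcomp Require Import zify ring lra.
Import Order.TTheory GRing.Theory Num.Theory.
Local Open Scope ring_scope.
Set Implicit Arguments.
Unset Strict Implicit.
Section SerLemmas.
Variable K : idomainType.

Definition wlb (al be : nat) (g : ser K) (c : nat) :=
  forall i j, g i j != 0 -> (c <= al * i + be * j)%N.

Lemma wlb0 al be g : wlb al be g 0.
Proof. by move=> i j _. Qed.

Lemma wlb_mul al be (f g : ser K) c1 c2 : wlb al be f c1 -> wlb al be g c2 ->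
  wlb al be (smul f g) (c1 + c2)%N.
Proof.
move=> hf hg i j; apply: contraR; rewrite -ltnNge => hlt.
apply/eqP; rewrite /smul big1 // => a _; rewrite big1 // => b _.
have ha : (a <= i)%N by rewrite -ltnS.
have hb : (b <= j)%N by rewrite -ltnS.
case: (eqVneq (f a b) 0) => [->|fa]; first by rewrite mul0r.
case: (eqVneq (g (i-a)%N (j-b)%N) 0) => [->|gb]; first by rewrite mulr0.
exfalso; have h1 := hf _ _ fa; have h2 := hg _ _ gb.
move: h2; rewrite !mulnBr => h2.
have : (al * a <= al * i)%N by rewrite leq_mul2l ha orbT.
have : (be * b <= be * j)%N by rewrite leq_mul2l hb orbT.
lia.
Qed.

Lemma wlb_exp al be (f : ser K) c k : wlb al be f c -> wlb al be (sexp f k) (k * c)%N.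
Proof.
move=> hf; elim: k => [|k IH]; first by rewrite mul0n; apply: wlb0.
rewrite mulSn; exact: (wlb_mul hf IH).
Qed.

Lemma wlb_comp al be (q A B : ser K) a b c : wlb al be A a -> wlb al be B b ->
  (forall k l, q k l != 0 -> (c <= k * a + l * b)%N) ->
  wlb al be (scomp q A B) c.
Proof.
move=> hA hB hq i j; apply: contraR; rewrite -ltnNge => hlt.
apply/eqP; rewrite /scomp big1 // => k _; rewrite big1 // => l _.
case: (eqVneq (q k l) 0) => [->|qk]; first by rewrite mul0r.
have hm := wlb_mul (wlb_exp (k:=k) hA) (wlb_exp (k:=l) hB).
case: (eqVneq (smul (sexp A k) (sexp B l) i j) 0) => [->|sn]; first by rewrite mulr0.
exfalso; have := hm _ _ sn; have := hq _ _ qk; rewrite (mulnC k) (mulnC l); lia.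
Qed.

Definition zs (g : ser K) (c : nat) := forall i, (i < c)%N -> g i 0%N = 0.

Lemma smul_slice (f g : ser K) i : smul f g i 0 = \sum_(a < i.+1) f a 0%N * g (i - a)%N 0%N.
Proof. by apply: eq_bigr => a _; rewrite big_ord1 subn0. Qed.

Lemma zs_mul (f g : ser K) c1 c2 : zs f c1 -> zs g c2 ->
  zs (smul f g) (c1 + c2)%N /\ smul f g (c1 + c2)%N 0 = f c1 0%N * g c2 0%N.
Proof.
move=> hf hg; split.
  move=> i hi; rewrite smul_slice big1 // => a _.
  have ha : (a <= i)%N by rewrite -ltnS.
  case: (ltnP a c1) => h; first by rewrite hf // mul0r.
  by rewrite hg ?mulr0 //; lia.
rewrite smul_slice.
have hc : (c1 < (c1 + c2).+1)%N by lia.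
rewrite (bigD1 (Ordinal hc)) //= big1 ?addr0; first by congr (_ * g _ _); lia.
move=> a /eqP ha.
have ha' : (nat_of_ord a != c1) by apply/eqP => e; apply: ha; apply: val_inj.
have ha2 : (a <= c1 + c2)%N by rewrite -ltnS.
case: (ltnP a c1) => h; first by rewrite hf // mul0r.
have hca : (c1 < a)%N by rewrite ltn_neqAle eq_sym ha' h.
by rewrite hg ?mulr0 //; lia.
Qed.

Lemma zs_sone : zs (sone K) 0 /\ sone K 0 0 = 1.
Proof. by split. Qed.

Lemma zs_exp (f : ser K) c k : zs f c -> zs (sexp f k) (k * c)%N /\ sexp f k (k * c)%N 0 = f c 0%N ^+ k.
Proof.
move=> hf; elim: k => [|k [IH1 IH2]]; first by rewrite mul0n expr0; exact: zs_sone.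
rewrite mulSn exprS -IH2; exact: zs_mul.
Qed.

Lemma zs_comp (q A B : ser K) a b g0 : zs A a -> zs B b -> (0 < a)%N ->
  (forall k l, q k l != 0 -> (k, l) != (g0, 0%N) -> (g0 * a < k * a + l * b)%N) ->
  zs (scomp q A B) (g0 * a)%N /\ scomp q A B (g0 * a)%N 0 = q g0 0%N * A a 0%N ^+ g0.
Proof.
move=> hA hB ha hq.
have key : forall k l i, (i < k * a + l * b)%N ->
    smul (sexp A k) (sexp B l) i 0 = 0.
  move=> k l i hi.
  have [h1 _] := zs_mul (zs_exp k hA).1 (zs_exp l hB).1.
  exact: h1.
split.
  move=> i hi; rewrite /scomp big1 // => k _; rewrite big1 // => l _.
  case: (eqVneq (q k l) 0) => [->|qk]; first by rewrite mul0r.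
  rewrite key ?mulr0 //.
  case: (eqVneq ((k : nat), (l : nat)) (g0, 0%N)) => [[-> ->]|ne]; first by lia.
  have := hq _ _ qk ne; lia.
rewrite /scomp addn0.
have hk : (g0 < (g0 * a).+1)%N by rewrite ltnS leq_pmulr.
have hl : (0 < (g0 * a).+1)%N by [].
rewrite (bigD1 (Ordinal hk)) //= (bigD1 (Ordinal hl)) //=.
rewrite big1 ?addr0; last first.
  move=> l /eqP hl'.
  have hl0 : (nat_of_ord l != 0)%N by apply/eqP => e; apply: hl'; apply: val_inj.
  case: (eqVneq (q g0 l) 0) => [->|qk]; first by rewrite mul0r.
  rewrite key ?mulr0 //; apply: hq => //.
  by rewrite xpair_eqE eqxx /=.
rewrite big1 ?addr0; last first.
  move=> k /eqP hk'.
  have hk0 : (nat_of_ord k != g0)%N by apply/eqP => e; apply: hk'; apply: val_inj.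
  rewrite big1 // => l _.
  case: (eqVneq (q k l) 0) => [->|qk]; first by rewrite mul0r.
  rewrite key ?mulr0 //; apply: hq => //.
  by rewrite xpair_eqE (negbTE hk0).
congr (_ * _).
have [_ h2] := zs_mul (zs_exp g0 hA).1 (zs_sone).1.
rewrite addn0 in h2; rewrite /= in h2.
rewrite /sexp /= in h2 *.
by rewrite h2 mulr1; exact: (zs_exp g0 hA).2.
Qed.

Lemma ord_le (g : ser K) i j : g i j != 0 -> (ser_order g <= i + j)%N.
Proof.
move=> h; rewrite /ser_order; case: pselect => [hex|hne].
  case: ex_minnP => m _; apply.
  by apply/existsP; exists (@Ordinal (i+j).+1 i (leq_addr j i)) => /=; rewrite addKn.
exfalso; apply: hne; exists (i + j)%N.
by apply/existsP; exists (@Ordinal (i+j).+1 i (leq_addr j i)) => /=; rewrite addKn.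
Qed.

Lemma ord_att (g : ser K) : (exists i j, g i j != 0) ->
  exists i j, g i j != 0 /\ ser_order g = (i + j)%N.
Proof.
move=> [i [j h]]; rewrite /ser_order; case: pselect => [hex|hne].
  case: ex_minnP => m /existsP [x hx] _.
  exists x, (m - x)%N; split => //.
  have := ltn_ord x; lia.
exfalso; apply: hne; exists (i + j)%N.
by apply/existsP; exists (@Ordinal (i+j).+1 i (leq_addr j i)) => /=; rewrite addKn.
Qed.

End SerLemmas.
Section Poly.
Variables (K : nzRingType) (R : realFieldType).

Lemma poly_lb (q : ser K) (al be c : nat) :
  (forall i j, q i j != 0 -> (c <= al * i + be * j)%N) ->
  forall x y : R, newton_polygon q x y -> c%:R <= al%:R * x + be%:R * y.
Proof.
move=> hq x y [N [lam [px [py [hk [hs [-> ->]]]]]]].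
rewrite !mulr_sumr -big_split /=.
have -> : (c%:R : R) = \sum_(k < N) lam k * c%:R by rewrite -mulr_suml hs mul1r.
apply: ler_sum => k _.
have [hl [i [j [qij [hi hj]]]]] := hk k (ltn_ord k).
have hc := hq _ _ qij.
have : (c%:R : R) <= al%:R * px k + be%:R * py k.
  apply: (le_trans (y := (al * i + be * j)%N%:R)); first by rewrite ler_nat.
  by rewrite natrD !natrM; apply: lerD; apply: ler_wpM2l.
move=> h.
have -> : al%:R * (lam k * px k) + be%:R * (lam k * py k) = lam k * (al%:R * px k + be%:R * py k) by ring.
exact: ler_wpM2l.
Qed.

Lemma poly_supp (q : ser K) i j : q i j != 0 -> newton_polygon q (i%:R : R) j%:R.
Proof.
move=> h; exists 1%N, (fun _ => 1), (fun _ => i%:R), (fun _ => j%:R).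
split; first by move=> k _; split => //; exists i, j.
by rewrite !big_ord1 !mul1r.
Qed.

Lemma poly_up (q : ser K) (x y e : R) : newton_polygon q x y -> 0 <= e ->
  newton_polygon q x (y + e).
Proof.
move=> [N [lam [px [py [hk [hs [ex ey]]]]]]] he.
exists N, lam, px, (fun k => py k + e); split.
  move=> k hkN; have [hl [i [j [qij [hi hj]]]]] := hk k hkN.
  split => //; exists i, j; split => //; split => //.
  by rewrite -[j%:R]addr0 lerD.
split => //; split => //.
rewrite ey; under [X in _ = X]eq_bigr do rewrite mulrDr.
by rewrite big_split /= -mulr_suml hs mul1r.
Qed.

Lemma lin2 (a1 b1 a2 b2 X Y : R) : a1 * b2 != a2 * b1 ->
  a1 * X + b1 * Y = 0 -> a2 * X + b2 * Y = 0 -> X = 0 /\ Y = 0.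
Proof.
move=> hd e1 e2.
have hX : (a1 * b2 - a2 * b1) * X = 0.
  have -> : (a1 * b2 - a2 * b1) * X = b2 * (a1 * X + b1 * Y) - b1 * (a2 * X + b2 * Y) by ring.
  by rewrite e1 e2 !mulr0 subr0.
have hY : (a1 * b2 - a2 * b1) * Y = 0.
  have -> : (a1 * b2 - a2 * b1) * Y = a1 * (a2 * X + b2 * Y) - a2 * (a1 * X + b1 * Y) by ring.
  by rewrite e1 e2 !mulr0 subr0.
have hd' : a1 * b2 - a2 * b1 != 0 by rewrite subr_eq0.
move/eqP: hX; move/eqP: hY; rewrite !mulf_eq0 (negbTE hd') /=.
by move=> /eqP -> /eqP ->.
Qed.

Lemma pos_comb (t u v : R) : 0 < t < 1 -> 0 <= u -> 0 <= v ->
  t * u + (1 - t) * v = 0 -> u = 0 /\ v = 0.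
Proof. move=> /andP[t0 t1] u0 v0 e; split; nra. Qed.

Lemma vertex_crit (q : ser K) (a b a1 b1 a2 b2 : nat) : q a b != 0 ->
  (forall i j, q i j != 0 -> (a1 * a + b1 * b <= a1 * i + b1 * j)%N) ->
  (forall i j, q i j != 0 -> (a2 * a + b2 * b <= a2 * i + b2 * j)%N) ->
  (a1 * b2 != a2 * b1)%N ->
  is_vertex (newton_polygon (R:=R) q) a%:R b%:R.
Proof.
move=> qab h1 h2 hd; split; first exact: poly_supp.
move=> x1 y1 x2 y2 t HA HB ht ex ey.
have L1 := poly_lb h1; have L2 := poly_lb h2.
have hdR : (a1%:R * b2%:R != a2%:R * b1%:R :> R) by rewrite -!natrM eqr_nat.
have key : forall (al be : nat), (a1 = al /\ b1 = be) \/ (a2 = al /\ b2 = be) ->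
  al%:R * x1 + be%:R * y1 = al%:R * a%:R + be%:R * b%:R :> R /\
  al%:R * x2 + be%:R * y2 = al%:R * a%:R + be%:R * b%:R :> R.
  move=> al be hab.
  have hA : ((al * a + be * b)%N%:R : R) <= al%:R * x1 + be%:R * y1.
    by case: hab => [[<- <-]|[<- <-]]; [exact: L1|exact: L2].
  have hB : ((al * a + be * b)%N%:R : R) <= al%:R * x2 + be%:R * y2.
    by case: hab => [[<- <-]|[<- <-]]; [exact: L1|exact: L2].
  rewrite natrD !natrM in hA hB.
  have := @pos_comb t (al%:R * x1 + be%:R * y1 - (al%:R * a%:R + be%:R * b%:R))
    (al%:R * x2 + be%:R * y2 - (al%:R * a%:R + be%:R * b%:R)) ht.
  rewrite !subr_ge0 => /(_ hA hB) [].
    rewrite ex ey; ring.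
  by move=> /eqP; rewrite subr_eq0 => /eqP -> /eqP; rewrite subr_eq0 => /eqP ->.
have [e1A e1B] := key a1 b1 (or_introl (conj erefl erefl)).
have [e2A e2B] := key a2 b2 (or_intror (conj erefl erefl)).
have E : forall (al be X Y : R), al * X + be * Y = al * a%:R + be * b%:R ->
    al * (X - a%:R) + be * (Y - b%:R) = 0.
  by move=> al be X Y e; rewrite !mulrBr addrACA -opprD e subrr.
have [hx1 hy1] := lin2 hdR (E _ _ _ _ e1A) (E _ _ _ _ e2A).
have [hx2 hy2] := lin2 hdR (E _ _ _ _ e1B) (E _ _ _ _ e2B).
move/eqP: hx1; move/eqP: hy1; move/eqP: hx2; move/eqP: hy2.
by rewrite !subr_eq0 => /eqP -> /eqP -> /eqP -> /eqP ->.
Qed.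

End Poly.

Lemma ex_min (P : nat -> Prop) : (exists n, P n) -> exists n, P n /\ forall k, P k -> (n <= k)%N.
Proof.
move=> [n0 h0].
case: (pselect (exists n, P n /\ forall k, P k -> (n <= k)%N)) => // hn.
exfalso.
suff : forall N k, (k <= N)%N -> ~ P k by move/(_ n0 n0 (leqnn _)).
elim=> [|N IH] k hk Pk.
  apply: hn; exists k; split => // k' _; move: hk; rewrite leqn0 => /eqP ->; done.
case: (ltnP k N.+1) => hk'.
  by apply: (IH k) => //; rewrite -ltnS.
apply: hn; exists k; split => // k' Pk'.
case: (ltnP k' k) => // hlt; exfalso; apply: (IH k') => //.
have : k = N.+1 by apply/eqP; rewrite eqn_leq hk hk'.
by move=> e; move: hlt; rewrite e ltnS.
Qed.

Lemma chain (s : nat) (n m : nat -> nat) :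
  (forall k, (1 <= k < s)%N -> (n k < n k.+1)%N) ->
  (forall k, (1 <= k < s)%N -> (m k.+1 < m k)%N) ->
  forall k l, (1 <= k)%N -> (k < l)%N -> (l <= s)%N -> (n k < n l)%N /\ (m l < m k)%N.
Proof.
move=> hn hm k; elim=> [|l IH] // hk hkl hls.
have hl : (1 <= l < s)%N by apply/andP; split; lia.
case: (ltnP k l) => h.
  have [h1 h2] := IH hk h (ltnW hls); split.
    exact: (ltn_trans h1 (hn _ hl)).
  exact: (ltn_trans (hm _ hl) h2).
have -> : k = l by lia.
by split; [apply: hn | apply: hm].
Qed.

Section Iter.
Variable K : idomainType.

Lemma wlb_scale (g : ser K) c t : wlb 1 1 g c -> wlb t t g (t * c).
Proof. by move=> h i j /h; rewrite !mul1n -mulnDr leq_mul2l => ->; rewrite orbT. Qed.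

Lemma zser_facts : zs (zser K) 1 /\ zser K 1 0 != 0 /\ wlb 1 1 (zser K) 1.
Proof.
split; first by move=> i; rewrite ltnS leqn0 => /eqP ->.
split; first by rewrite /zser /= oner_neq0.
by move=> i j; rewrite /zser; case: ifP => [/andP[/eqP -> /eqP ->]|]; rewrite ?eqxx.
Qed.

Lemma wser_facts b : zs (wser K) b /\ wlb 1 1 (wser K) 1.
Proof.
split; first by move=> i _; rewrite /wser andbF.
by move=> i j; rewrite /wser; case: ifP => [/andP[/eqP -> /eqP ->]|]; rewrite ?eqxx.
Qed.

Lemma skew_S (p : nat -> K) q k : skew_iter p q k.+1 =
  (scomp (lift1 p) (skew_iter p q k).1 (skew_iter p q k).2,
   scomp q (skew_iter p q k).1 (skew_iter p q k).2).
Proof. by []. Qed.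

End Iter.

Unset Implicit Arguments.
Theorem theorem4p3 (R : realType)
  (p : nat -> R[i]) (delta : nat)
  (hdelta : (1 <= delta)%N)
  (hp_low : forall k, (k < delta)%N -> p k = 0)
  (hp_lead : p delta != 0)
  (hp_conv : convergent1 p)
  (q : ser R[i])
  (hq0 : q 0%N 0%N = 0)
  (hq_nz : exists i j, q i j != 0)
  (hq_conv : convergent2 q)
  (s : nat) (n m : nat -> nat)
  (hn : forall k, (1 <= k < s)%N -> (n k < n k.+1)%N)
  (hm : forall k, (1 <= k < s)%N -> (m k.+1 < m k)%N)
  (hvert : forall x y : R,
     is_vertex (newton_polygon q) x y <->
     exists2 k, (1 <= k <= s)%N & x = (n k)%:R /\ y = (m k)%:R)
  (hs : (1 < s)%N)
  (hcase2 : delta%:R <= y_intercept R (n s.-1) (m s.-1) (n s) (m s))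
  (hd : m s = 0%N)
  (hT : delta%:R < y_intercept R (n s.-1) (m s.-1) (n s) (m s)) :
  let gamma := n s in
  let l1 : R := ((n s)%:R - (n s.-1)%:R) / ((m s.-1)%:R - (m s)%:R) in
  let gamma_ k := (gamma * delta ^ k.-1)%N in
  (l1 <= 1 -> forall k, (1 <= k)%N -> ser_order (Qit p q k) = gamma_ k) /\
  (1 < l1 ->
     (l1^-1 * gamma%:R <= (ser_order q)%:R /\ (ser_order q < gamma)%N) /\
     (forall k, (2 <= k)%N ->
        l1^-1 * (gamma_ k)%:R < (ser_order (Qit p q k))%:R /\
        (ser_order (Qit p q k) <= gamma_ k)%N)).
Proof.
cbv zeta.
have hs1 : (1 <= s.-1)%N by lia.
have hss : (s.-1 < s)%N by lia.
have [hnlt hmlt] := chain hn hm hs1 hss (leqnn s).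
rewrite hd in hmlt.
move: hT hvert; rewrite /y_intercept hd.
set n' := n s.-1 in hnlt *; set m' := m s.-1 in hmlt *; set g := n s in hnlt *.
move=> hT hvert.
set w := (g - n')%N.
have hw : (0 < w)%N by rewrite /w subn_gt0.
have hgw : g = (n' + w)%N by rewrite /w subnKC // ltnW.
have hwR : (g%:R - n'%:R : R[i]) = w%:R by rewrite hgw natrD addrAC subrr add0r.
have hl1 : ((g%:R - n'%:R) / (m'%:R - 0%:R) : R) = w%:R / m'%:R.
  by rewrite subr0 hgw natrD addrAC subrr add0r.
rewrite hl1.
have hTn : (delta * w < m' * g)%N.
  have hwR' : (0 : R) < w%:R by rewrite ltr0n.
  have e : (m'%:R - n'%:R * ((0%:R - m'%:R) / (g%:R - n'%:R)) : R) = (m' * g)%N%:R / w%:R.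
    have -> : (g%:R - n'%:R : R) = w%:R by rewrite hgw natrD addrAC subrr add0r.
    rewrite hgw natrM natrD; field; by rewrite lt0r_neq0.
  move: hT; rewrite e ltr_pdivlMr // -natrM ltr_nat; lia.
have hmpos : (0 < m')%N by [].
have hvP := (hvert n'%:R m'%:R).2 (ex_intro2 _ _ s.-1 (introT andP (conj hs1 (ltnW hss))) (conj erefl erefl)).
have hms : (0 : R) = (m s)%:R by rewrite hd.
have hvG := (hvert g%:R 0).2 (ex_intro2 _ _ s (introT andP (conj (ltnW hs) (leqnn s))) (conj erefl hms)).
have SI : forall i j, q i j != 0 -> (m' * g <= m' * i + w * j)%N.
  move=> i j qij; rewrite leqNgt; apply/negP => hlt.
  pose F i j := (m' * i + w * j)%N.
  have [f0 [[a0' [j0' [qa0' Fa0']]] fmin]] :=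
    ex_min (P := fun f => exists i j, q i j != 0 /\ F i j = f)
      (ex_intro _ (F i j) (ex_intro _ i (ex_intro _ j (conj qij erefl)))).
  have [a0 [[j0 [qa0 Fa0]] amin]] :=
    ex_min (P := fun a => exists j, q a j != 0 /\ F a j = f0)
      (ex_intro _ a0' (ex_intro _ j0' (conj qa0' Fa0'))).
  have fle : forall i1 j1, q i1 j1 != 0 -> (f0 <= F i1 j1)%N.
    by move=> i1 j1 q1; apply: fmin; exists i1, j1.
  have hv : is_vertex (newton_polygon (R:=R) q) a0%:R j0%:R.
    apply: (@vertex_crit _ R q a0 j0 m' w (a0 * m' + 1)%N (a0 * w)%N) => //.
    - by move=> i1 j1 q1; have := fle _ _ q1; rewrite /F in Fa0 *; lia.
    - move=> i1 j1 q1.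
      have e : forall x y, ((a0 * m'+1)*x + a0 * w*y = a0*(F x y) + x)%N.
        by move=> x y; rewrite /F; ring.
      rewrite !e Fa0.
      have hf := fle _ _ q1.
      case: (eqVneq (F i1 j1) f0) => hF.
        have := amin i1 (ex_intro _ j1 (conj q1 hF)); rewrite hF; lia.
      have : (a0 * f0.+1 <= a0 * F i1 j1)%N.
        by rewrite leq_mul2l; apply/orP; right; rewrite ltn_neqAle eq_sym hF hf.
      rewrite mulnS; lia.
    - apply/eqP => e.
      have e2 : ((a0 * m' + 1) * w = m' * (a0 * w) + w)%N by ring.
      move: e; rewrite e2; lia.
  have [k hk [ea eb]] := (hvert _ _).1 hv.
  move/eqP: ea; rewrite eqr_nat => /eqP ea.
  move/eqP: eb; rewrite eqr_nat => /eqP eb.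
  have Flt : (F a0 j0 < m' * g)%N.
    by rewrite Fa0; apply: (leq_ltn_trans (fle _ _ qij)).
  have hks : (k < s.-1)%N.
    case/andP: hk => hk1 hk2.
    case: (ltngtP k s.-1) => // hk3.
      have hk4 : k = s by lia.
      by move: Flt; rewrite /F ea eb hk4 hd muln0 addn0 -/g ltnn.
    move: Flt; rewrite /F ea eb hk3 -/n' -/m' hgw mulnDr (mulnC w); lia.
  have [ha0 _] := chain hn hm (k:=k) (l:=s.-1) (andP hk).1 hks (ltnW hss).
  rewrite -ea -/n' in ha0.
  pose D := (g - a0)%N.
  have hDw : (w < D)%N by rewrite /D /w; lia.
  have hDR : (0 : R) < D%:R by rewrite ltr0n; lia.
  have eD : (D%:R : R) = g%:R - a0%:R by rewrite /D natrB //; lia.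
  have ew : (w%:R : R) = g%:R - n'%:R by rewrite /w natrB //; lia.
  pose t : R := w%:R / D%:R.
  have ht0 : 0 < t by rewrite divr_gt0 // ltr0n.
  have ht1 : t < 1 by rewrite ltr_pdivrMr // mul1r ltr_nat.
  have h1t : (0 : R) < 1 - t by rewrite subr_gt0.
  pose y0 : R := (m'%:R - t * j0%:R) / (1 - t).
  have hy0 : 0 <= y0.
    apply: divr_ge0; last exact: ltW.
    rewrite subr_ge0 /t mulrAC ler_pdivrMr // -!natrM ler_nat.
    have : (m' * D = m' * g - m' * a0)%N by rewrite /D mulnBr.
    move: Flt; rewrite /F; lia.
  have hG : newton_polygon q (g%:R : R) y0.
    by have := poly_up hvG.1 hy0; rewrite add0r.
  have ex : (n'%:R : R) = t * a0%:R + (1 - t) * g%:R.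
    rewrite /t ew eD; field; rewrite -eD; exact: lt0r_neq0.
  have ey : (m'%:R : R) = t * j0%:R + (1 - t) * y0.
    rewrite /y0; field; exact: lt0r_neq0.
  have [hx _] := hvP.2 _ _ _ _ t (poly_supp R qa0) hG (introT andP (conj ht0 ht1)) ex ey.
  by move/eqP: hx; rewrite eqr_nat => /eqP hx; move: ha0; rewrite hx ltnn.
have qg0 : q g 0%N != 0.
  have [i0 hi0] : exists i, q i 0%N != 0.
    case: (pselect (exists i, q i 0%N != 0)) => // hne; exfalso.
    have hsup : forall i j, q i j != 0 -> (1 <= 0 * i + 1 * j)%N.
      move=> i j qij; case: j qij => [|j] qij; last by lia.
      by exfalso; apply: hne; exists i.
    have := @poly_lb _ R q 0 1 1 hsup _ _ hvG.1.
    by rewrite mul0r add0r mul1r ler10.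
  have [a0 [qa0 amin]] := ex_min (P := fun a => q a 0%N != 0) (ex_intro _ i0 hi0).
  have hv : is_vertex (newton_polygon (R:=R) q) a0%:R 0%:R.
    apply: (@vertex_crit _ R q a0 0 0 1 1 a0) => //.
    move=> i j qij; case: j qij => [|j] qij; first by rewrite muln0 !addn0 !mul1n; exact: amin.
    rewrite mul1n muln0 addn0; apply: leq_trans (leq_addl _ _); rewrite mulnS; exact: leq_addr.
  have [k hk [ea eb]] := (hvert _ _).1 hv.
  move/eqP: ea; rewrite eqr_nat => /eqP ea.
  move/eqP: eb; rewrite eqr_nat => /eqP eb.
  case/andP: hk => hk1 hk2.
  case: (ltngtP k s) => hk3.
  - have [_ h2] := chain hn hm hk1 hk3 (leqnn s).
    by move: h2; rewrite hd -eb.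
  - by move: hk2; rewrite leqNgt hk3.
  - by have -> : g = a0 by rewrite ea hk3.
pose P k := (skew_iter p q k).1.
pose Q k := (skew_iter p q k).2.
have PS : forall k, P k.+1 = scomp (lift1 p) (P k) (Q k) by [].
have QS : forall k, Q k.+1 = scomp q (P k) (Q k) by [].
have hdk : forall k, (0 < delta ^ k)%N by move=> k; rewrite expn_gt0 hdelta.
have IP : forall k, zs (P k) (delta ^ k)%N /\ P k (delta ^ k)%N 0%N != 0 /\ wlb 1 1 (P k) (delta ^ k)%N.
  elim=> [|k [h1 [h2 h3]]]; first by rewrite expn0; exact: zser_facts.
  have hlp : forall k' l, lift1 p k' l != 0 -> l = 0%N /\ (delta <= k')%N /\ p k' != 0.
    move=> k' l; rewrite /lift1; case: ifP => [/eqP -> hp|_]; last by move=> /eqP.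
    split => //; split => //; rewrite leqNgt; apply/negP => hlt; move: hp; rewrite hp_low //; by move/eqP.
  have zB : zs (Q k) 0 by [].
  have hc : forall k' l, lift1 p k' l != 0 -> (k', l) != (delta, 0%N) ->
      (delta * delta ^ k < k' * delta ^ k + l * 0)%N.
    move=> k' l /hlp [-> [hk' _]] hne.
    have hk2 : (delta < k')%N.
      rewrite ltn_neqAle hk' andbT; apply/eqP => e; move: hne; rewrite e; by move/eqP.
    by rewrite muln0 addn0 ltn_mul2r hdk hk2.
  have [z1 z2] := zs_comp h1 zB (hdk k) hc.
  split; first by rewrite expnS.
  split.
    rewrite expnS PS z2; apply: mulf_neq0; first by rewrite /lift1 eqxx.
    exact: expf_neq0.
  rewrite expnS PS; apply: (wlb_comp h3 (@wlb0 _ 1 1 (Q k))) => k' l /hlp [-> [hk' _]].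
  by rewrite muln0 addn0 leq_mul2r hk' orbT.
have KEY1 : forall k' l, q k' l != 0 -> (k', l) != (g, 0%N) -> (g * delta < k' * delta + l * g)%N.
  move=> k' l qkl hne; have hS := SI _ _ qkl.
  case: l qkl hS hne => [|l] qkl hS hne.
    have hk : (g <= k')%N by move: hS; rewrite muln0 addn0 leq_pmul2l.
    have hk2 : (g < k')%N.
      rewrite ltn_neqAle hk andbT; apply/eqP => e; move: hne; rewrite e; by move/eqP.
    by rewrite mul0n addn0 ltn_pmul2r.
  have h1 : (l.+1 * (delta * w) < l.+1 * (m' * g))%N by rewrite ltn_pmul2l.
  have h2 : (delta * (m' * g) <= delta * (m' * k' + w * l.+1))%N by rewrite leq_mul2l hS orbT.
  rewrite -(ltn_pmul2l hmpos); nia.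
have IQs : forall k, zs (Q k.+1) (g * delta ^ k)%N /\ Q k.+1 (g * delta ^ k)%N 0%N != 0.
  elim=> [|k [h1 h2]].
    have [zA [lA _]] := IP 0%N.
    have [zB _] := wser_facts R[i] (g.+1).
    have hc : forall k' l, q k' l != 0 -> (k', l) != (g, 0%N) -> (g * 1 < k' * 1 + l * g.+1)%N.
      move=> k' l qkl hne; case: l qkl hne => [|l] qkl hne; last by nia.
      have := KEY1 _ _ qkl hne; rewrite mul0n addn0 => h.
      by rewrite mul0n addn0 !muln1 -(ltn_pmul2r hdelta).
    have [z1 z2] := zs_comp zA zB (hdk 0%N) hc.
    rewrite expn0; split; first exact: z1.
    rewrite QS z2; apply: mulf_neq0 => //; exact: expf_neq0.
  have [zA [lA _]] := IP k.+1.
  have hc : forall k' l, q k' l != 0 -> (k', l) != (g, 0%N) ->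
      (g * delta ^ k.+1 < k' * delta ^ k.+1 + l * (g * delta ^ k))%N.
    move=> k' l qkl hne; have := KEY1 _ _ qkl hne.
    rewrite expnS => h.
    have := hdk k; nia.
  have [z1 z2] := zs_comp zA h1 (hdk k.+1) hc.
  split; first exact: z1.
  rewrite QS z2; apply: mulf_neq0 => //; exact: expf_neq0.
have hg0 : (0 < g)%N by lia.
have QI : forall k, Qit p q k = Q k by [].
have hPw : forall k, wlb 1 1 (P k) (delta ^ k)%N by move=> k; exact: (IP k).2.2.
have P0w : wlb 1 1 (P 0%N) 1 by have := hPw 0%N; rewrite expn0.
have [_ Q0w] := wser_facts R[i] 0.
have ordQ : forall k, (ser_order (Q k.+1) <= g * delta ^ k)%N.
  by move=> k; have := ord_le (IQs k).2; rewrite addn0.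
have hQnz : forall k, exists i j, Q k.+1 i j != 0 by move=> k; exists (g * delta ^ k)%N, 0%N; exact: (IQs k).2.
split.
  move=> hle k0 hk.
  have hwm : (w <= m')%N.
    by move: hle; rewrite ler_pdivrMr ?ltr0n // mul1r ler_nat.
  have KEY2 : forall k' l, q k' l != 0 -> (g * delta <= k' * delta + l * g)%N.
    move=> k' l qkl; have hS := SI _ _ qkl.
    have h1 : (l * (delta * w) <= l * (m' * g))%N by rewrite leq_mul2l ltnW ?orbT.
    have h2 : (delta * (m' * g) <= delta * (m' * k' + w * l))%N by rewrite leq_mul2l hS orbT.
    rewrite -(leq_pmul2l hmpos); nia.
  have IQ1 : forall k, wlb 1 1 (Q k.+1) (g * delta ^ k)%N.
    elim=> [|k IH].
      rewrite expn0 muln1 QS; apply: (wlb_comp P0w Q0w) => k' l qkl.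
      have hS := SI _ _ qkl; rewrite !muln1.
      rewrite -(leq_pmul2l hmpos); nia.
    rewrite QS; apply: (wlb_comp (hPw k.+1) IH) => k' l qkl.
    have := KEY2 _ _ qkl; rewrite expnS => h.
    have := hdk k; nia.
  case: k0 hk => [|k] // _.
  rewrite QI /=; apply/eqP; rewrite eqn_leq ordQ /=.
  have [i [j [hij ->]]] := ord_att (hQnz k).
  by have := IQ1 k _ _ hij; rewrite !mul1n.
move=> hgt.
have hmw : (m' < w)%N.
  by move: hgt; rewrite ltr_pdivlMr ?ltr0n // mul1r ltr_nat.
split.
  split.
    rewrite invf_div mulrAC ler_pdivrMr ?ltr0n // -!natrM ler_nat.
    have [i [j [hij ->]]] := ord_att hq_nz.
    have := SI _ _ hij; nia.
  have [i [j [hij hlt]]] : exists i j, q i j != 0 /\ (i + j < g)%N.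
    case: (pselect (exists i j, q i j != 0 /\ (i + j < g)%N)) => // hne; exfalso.
    have hsup : forall i j, q i j != 0 -> (g <= 1 * i + 1 * j)%N.
      move=> i j qij; rewrite !mul1n leqNgt; apply/negP => h; apply: hne; exists i, j; by split.
    have := @poly_lb _ R q 1 1 g hsup _ _ hvP.1.
    rewrite !mul1r -natrD ler_nat; lia.
  exact: leq_ltn_trans (ord_le hij) hlt.
have KEY3 : forall k' l, q k' l != 0 -> (m' * g * delta < k' * w * delta + l * m' * g)%N.
  move=> k' l qkl; have hS := SI _ _ qkl.
  case: l qkl hS => [|l] qkl hS.
    have hk : (g <= k')%N by move: hS; rewrite muln0 addn0 leq_pmul2l.
    have h4a : (m' * g < w * g)%N by rewrite ltn_pmul2r.
    have h4b : (w * g <= w * k')%N by rewrite leq_mul2l hk orbT.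
    by rewrite mul0n addn0 ltn_pmul2r // (mulnC k'); lia.
  have h1 : (l.+1 * (delta * w) < l.+1 * (m' * g))%N by rewrite ltn_pmul2l.
  have h2 : (delta * (m' * g) <= delta * (m' * k' + w * l.+1))%N by rewrite leq_mul2l hS orbT.
  have h3 : (m' * k' <= w * k')%N by rewrite leq_mul2r ltnW ?orbT.
  nia.
have IQ2 : forall k, wlb w w (Q k.+1) (m' * (g * delta ^ k) + (0 < k))%N.
  elim=> [|k IH].
    rewrite expn0 muln1 addn0 QS.
    apply: (wlb_comp (wlb_scale w P0w) (wlb_scale w Q0w)) => k' l qkl.
    have hS := SI _ _ qkl; rewrite !muln1.
    have h3 : (m' * k' <= w * k')%N by rewrite leq_mul2r ltnW ?orbT.
    nia.
  rewrite QS; apply: (wlb_comp (wlb_scale w (hPw k.+1)) IH) => k' l qkl.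
  have := KEY3 _ _ qkl; rewrite expnS /= => h.
  have := hdk k; nia.
move=> k hk.
case: k hk => [|[|k]] // _.
rewrite QI /=.
split; last exact: ordQ.
rewrite invf_div mulrAC ltr_pdivrMr ?ltr0n // -!natrM ltr_nat.
have [i [j [hij ->]]] := ord_att (hQnz k.+1).
have := IQ2 k.+1 _ _ hij; rewrite /=; nia.
Qed.
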